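(* Let $A$ be a finite alphabet. A sliding block code $\phi: A^{\mathbb{N}} \to A^{\mathbb{N}}$ is a local homeomorphism and $*$-commutes with the shift map $\sigma$ if and only if $\phi$ is a $k$-fold covering map (for some $k\in\mathbb{N}$) of the form $\phi=\tau_d$ for a regressive block map $d$.
   Context: $A$ is a finite set with the discrete topology; $\mathbb{N}=\{1,2,3,\dots\}$; $A^{\mathbb{N}}$ is the space of one-sided infinite sequences over $A$ with the product topology; $\sigma(x_1x_2x_3\cdots)=x_2x_3\cdots$. A block map is a function $d:A^n\to A$ ($n\in\mathbb{N}$), and $\tau_d: A^{\mathbb{N}}\to A^{\mathbb{N}}$ is $\tau_d(x)_i=d(x_i\cdots x_{i+n-1})$; a sliding block code is a map of the form $\tau_d$. The block map $d$ is regressive if for each fixed $x_1\cdots x_{n-1}\in A^{n-1}$ the map $A\to A$, $a\mapsto d(ax_1\cdots x_{n-1})$, is bijective. A continuous map $f:X\to Y$ is a local homeomorphism if every $x\in X$ has an open neighborhood $U$ such that $f(U)$ is open in $Y$ and $f:U\to f(U)$ is a homeomorphism. Two functions $S,T: X\to X$ $*$-commute if $ST=TS$ and for every $(y,z)$ with $S(y)=T(z)$ there exists a unique $x$ with $T(x)=y$ and $S(x)=z$. For a continuous surjection $p:E\to B$, an open set $U\subseteq B$ is evenly covered if $p^{-1}(U)$ is a union of pairwise disjoint open sets $V_\alpha$ each of which $p$ maps homeomorphically onto $U$; $p$ is a covering map if every point of $B$ has an evenly covered open neighborhood, and a $k$-fold covering map if moreover $|p^{-1}(b)|=k$ for every $b\in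 B$. *)

(* Defs.v *)
From HB Require Import structures.
From mathcomp Require Import all_boot all_order all_algebra.
From mathcomp Require Import all_classical all_reals all_analysis.
Set Implicit Arguments. Unset Strict Implicit. Unset Printing Implicit Defensive.
Local Open Scope classical_set_scope.
Local Open Scope card_scope.

(* One-sided sequences over A, with the product of discrete topologies.
   Coordinate i (i = 0,1,2,...) of x corresponds to x_{i+1} in the paper. *)
Definition seqspace (A : finType) : Type :=
  prod_topology (fun _ : nat => discrete_topology A).

Definition sigma_shift (A : finType) (x : seqspace A) : seqspace A := fun i => x i.+1.

Definition tau (A : finType) (m : nat) (d : m.+1.-tuple A -> A)
  (x : seqspace A) : seqspace A :=
  fun i => d [tuple x (i + j)%N | j < m.+1].

Definition is_sliding_block_code (A : finType) (phi : seqspace A -> seqspace A) :=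
  exists (m : nat) (d : m.+1.-tuple A -> A), phi = tau d.

Definition regressive (A : finType) (m : nat) (d : m.+1.-tuple A -> A) :=
  forall w : m.-tuple A, bijective (fun a : A => d (cons_tuple a w)).

(* f restricted to U is a homeomorphism onto f(U) (subspace topologies). *)
Definition homeo_on (X Y : topologicalType) (U : set X) (f : X -> Y) :=
  [/\ {in U &, injective f},
      {within U, continuous f} &
      forall V : set X, open V ->
        exists W : set Y, open W /\ f @` (U `&` V) = f @` U `&` W].

Definition local_homeomorphism (X Y : topologicalType) (f : X -> Y) :=
  continuous f /\
  forall x : X, exists U : set X,
    [/\ open U, U x, open (f @` U) & homeo_on U f].

Definition star_commute (X : Type) (S T : X -> X) :=
  S \o T = T \o S /\
  forall y z : X, S y = T z -> exists! x : X, T x = y /\ S x = z.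

Definition evenly_covered (E B : topologicalType) (p : E -> B) (U : set B) :=
  open U /\
  exists F : set (set E),
    [/\ p @^-1` U = \bigcup_(V in F) V,
        (forall V, F V -> open V),
        (forall V W, F V -> F W -> V <> W -> V `&` W = set0) &
        (forall V, F V -> p @` V = U /\ homeo_on V p)].

Definition covering_map (E B : topologicalType) (p : E -> B) :=
  [/\ continuous p, (forall b : B, exists e : E, p e = b) &
      forall b : B, exists U : set B, U b /\ evenly_covered p U].

Definition kfold_covering_map (E B : topologicalType) (k : nat) (p : E -> B) :=
  covering_map p /\ forall b : B, p @^-1` [set b] #= `I_k.

(* Main.v *)
Require Import Defs.
From HB Require Import structures.
From mathcomp Require Import all_boot all_order all_algebra.
From mathcomp Require Import all_classical all_reals all_analysis.
From mathcomp Require Import zify.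
Set Implicit Arguments. Unset Strict Implicit. Unset Printing Implicit Defensive.
Local Open Scope classical_set_scope.

Definition agree (A : finType) (n : nat) (x y : seqspace A) :=
  forall i, (i < n)%N -> y i = x i.

Section Comb.
Variables (A : finType) (m : nat) (d : m.+1.-tuple A -> A).

Lemma tupT1 (x : seqspace A) :
  [tuple x (0 + j)%N | j < m.+1] = cons_tuple (x 0%N) [tuple x j.+1 | j < m].
Proof.
apply: eq_from_tnth => j; rewrite tnth_mktuple add0n.
rewrite (tnth_nth (x 0%N)) /=.
case: j => [[|j] Hj] //=.
have Hj' : (j < m)%N by [].
by rewrite (nth_map (Ordinal Hj')) ?size_enum_ord // nth_enum_ord.
Qed.

Lemma tupT2 (x : seqspace A) i :
  [tuple x (i.+1 + j)%N | j < m.+1] = [tuple (sigma_shift x) (i + j)%N | j < m.+1].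
Proof. by apply: eq_from_tnth => j; rewrite !tnth_mktuple addSn. Qed.

Lemma tau_shift (x : seqspace A) : tau d (sigma_shift x) = sigma_shift (tau d x).
Proof.
by apply: functional_extensionality_dep => i; rewrite /tau /sigma_shift; congr d;
  apply: eq_from_tnth => j; rewrite !tnth_mktuple addSn.
Qed.

Lemma tau_loc n (x y : seqspace A) : agree (n + m) x y -> agree n (tau d x) (tau d y).
Proof.
move=> H i Hi; rewrite /tau; congr d; apply: eq_from_tnth => j.
rewrite !tnth_mktuple H //; have := ltn_ord j; lia.
Qed.

Lemma tau0 (x : seqspace A) : tau d x 0%N = d (cons_tuple (x 0%N) [tuple x j.+1 | j < m]).
Proof. by rewrite /tau tupT1. Qed.

Lemma regressive_star : regressive d -> star_commute (tau d) (@sigma_shift A).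
Proof.
move=> reg; split.
  by apply: functional_extensionality_dep => x /=; rewrite tau_shift.
move=> y z Hyz.
have [g fg gf] := reg [tuple y j | j < m].
pose x : seqspace A := fun i => if i is j.+1 then y j else g (z 0%N).
have Hx1 : sigma_shift x = y by [].
have Hx2 : tau d x = z.
  apply: functional_extensionality_dep => -[|i].
    by rewrite tau0 /=; exact: gf.
  have := congr1 (fun f => f i) Hyz; rewrite /= /sigma_shift => <-.
  by rewrite /tau tupT2.
exists x; split => // x' [Hx'1 Hx'2].
apply: functional_extensionality_dep => -[|i]; last first.
  by rewrite /= -Hx'1.
rewrite /= -Hx'2 tau0.
have -> : [tuple x' j.+1 | j < m] = [tuple y j | j < m].
  by apply: eq_from_tnth => j; rewrite !tnth_mktuple -Hx'1.
by rewrite fg.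
Qed.

Lemma star_regressive : star_commute (tau d) (@sigma_shift A) -> regressive d.
Proof.
move=> [Hc Hu] w; apply: injF_bij => a a' Haa.
pose y : seqspace A := fun i => nth a w i.
pose x : seqspace A := fun i => if i is j.+1 then y j else a.
pose x' : seqspace A := fun i => if i is j.+1 then y j else a'.
have Hw : [tuple y j | j < m] = w.
  by apply: eq_from_tnth => j; rewrite tnth_mktuple (tnth_nth a).
have Ht : tau d x = tau d x'.
  apply: functional_extensionality_dep => -[|i].
    by rewrite !tau0 /= Hw.
  by rewrite /tau !tupT2.
have Hyz : tau d y = sigma_shift (tau d x).
  by rewrite -tau_shift.
have [x0 [_ Hun]] := Hu _ _ Hyz.
have E1 := Hun x (conj erefl erefl).
have E2 := Hun x' (conj erefl (esym Ht)).
by have := congr1 (fun f => f 0%N) (etrans (esym E1) E2).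
Qed.

End Comb.
Lemma seq_bound (T : eqType) (s : seq T) (Q : T -> nat -> Prop) :
  (forall M, M \in s -> exists n, Q M n) ->
  exists N, forall M, M \in s -> exists2 n, (n < N)%N & Q M n.
Proof.
elim: s => [|a s IH] H; first by exists 0%N.
have [N HN] := IH (fun M hM => H M (mem_behead (hM : M \in behead (a :: s)))).
have [n Hn] := H a (mem_head _ _).
exists (maxn N n).+1 => M; rewrite in_cons => /orP[/eqP->|/HN[k kN Qk]].
  by exists n => //; lia.
by exists k => //; lia.
Qed.
Lemma nbhs_cyl (A : finType) (x : seqspace A) (U : set (seqspace A)) :
  nbhs x U -> exists n, forall y : seqspace A, (forall i, (i < n)%N -> y i = x i) -> U y.
Proof.
move=> [] P [] [] Q QfinP <- [] V JV Vpz PU.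
have [L Lsub VL] := QfinP _ JV.
have : forall M, M \in finmap.enum_fset L -> exists w, forall y : seqspace A, y w = x w -> isSubBaseTopological.b M y.
  move=> M LM; move: (LM) => /Lsub /set_mem [] w _ [N oN NM].
  exists w => y yw; rewrite -NM /=.
  have : isSubBaseTopological.b M x by move: Vpz; rewrite -VL => /(_ _ LM).
  by rewrite -NM /= yw.
move=> /seq_bound [n Hn]; exists n => y yx; apply: PU; exists V => //.
have Vy : V y.
  rewrite -VL => M LM; have [w wn Hw] := Hn M LM; apply: Hw; exact: yx.
exact: Vy.
Qed.
Lemma cyl_nbhs (A : finType) (x : seqspace A) n : nbhs x (agree n x).
Proof.
elim: n => [|n IH].
  by apply: filterS (@filterT _ _ _) => y _ i; rewrite ltn0.
have : nbhs x (proj n @^-1` [set x n] : set (seqspace A)).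
  apply: open_nbhs_nbhs; split => //.
  suff : @open (seqspace A) (proj n @^-1` [set x n]) by [].
  apply: open_comp; [move=> + _; exact: proj_continuous| apply: discrete_open].
move=> H; apply: filterS (filterI IH H) => y [Hy1 Hy2] i.
rewrite ltnS leq_eqVlt => /orP[/eqP->|]; first exact: Hy2.
exact: Hy1.
Qed.

Lemma open_cyl (A : finType) (x : seqspace A) n : open (agree n x).
Proof.
rewrite openE => y Hy; apply: filterS (cyl_nbhs y n) => z Hz i Hi.
by rewrite Hz // Hy.
Qed.
Lemma seqspace_compact (A : finType) : compact [set: seqspace A].
Proof.
have := tychonoff (fun n : nat => @finite_compact (discrete_topology A) setT finite_finset).
by congr (compact _); rewrite eqEsubset.
Qed.

Definition pseq (A : finType) (a : A) : Type := seqspace A.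
HB.instance Definition _ (A : finType) (a : A) := Topological.on (pseq a).
HB.instance Definition _ (A : finType) (a : A) := isPointed.Build (pseq a) (fun _ => a).

Lemma unif (A : finType) (P : seqspace A -> nat -> Prop) :
  (forall x, exists n, P x n) ->
  exists N, forall y, exists x n, [/\ (n <= N)%N, P x n & agree n x y].
Proof.
move=> HP.
have [[a _]|noA] := pselect (exists a : A, True); last first.
  by exists 0%N => y; exfalso; apply: noA; exists (y 0%N).
have := @seqspace_compact A; rewrite (@compact_cover (pseq a)) => /(_ _
  [set xn : seqspace A * nat | P xn.1 xn.2] (fun xn => agree xn.2 xn.1)).
case.
- by move=> i _; exact: open_cyl.
- move=> y _; have [n Hn] := HP y; exists (y, n) => //.
- move=> D' D'sub Hcov.
  have [N HN] := @seq_bound _ (finmap.enum_fset D') (fun xn k => (xn.2 < k)%N)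
     (fun xn _ => ex_intro _ xn.2.+1 (ltnSn _)).
  exists N => y; have [xn /= xnD' Hy] := Hcov y I.
  have [k kN Hk] := HN xn xnD'.
  exists xn.1, xn.2; split => //; first by lia.
  by have := D'sub _ xnD'; rewrite inE.
Qed.

Section Agree.
Variable A : finType.
Implicit Types x y z : seqspace A.
Lemma agree_sym n x y : agree n x y -> agree n y x.
Proof. by move=> H i Hi; rewrite H. Qed.
Lemma agree_trans n x y z : agree n x y -> agree n y z -> agree n x z.
Proof. by move=> H1 H2 i Hi; rewrite H2 // H1. Qed.
Lemma agree_le n n' x y : (n <= n')%N -> agree n' x y -> agree n x y.
Proof. by move=> Hn H i Hi; apply: H; lia. Qed.
Lemma agree_refl n x : agree n x x.
Proof. by []. Qed.

Lemma open_cyl_ex (U : set (seqspace A)) x : open U -> U x -> exists n, agree n x `<=` U.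
Proof. by rewrite openE => oU Ux; have [n Hn] := nbhs_cyl (oU x Ux); exists n. Qed.
End Agree.

Section Top.
Variables (A : finType) (m : nat) (d : m.+1.-tuple A -> A).
Hypothesis LH : local_homeomorphism (tau d).

Lemma open_map (O : set (seqspace A)) : open O -> open (tau d @` O).
Proof.
move=> oO; rewrite openE => _ [y Oy <-].
have [U [oU Uy oTU [_ _ H]]] := LH.2 y.
have [W [oW HW]] := H O oO.
have : open (tau d @` U `&` W) by apply: openI.
move=> oUW; apply: (@filterS _ _ _ (tau d @` U `&` W)).
  by rewrite -HW => _ [z [_ Oz] <-]; exists z.
apply: open_nbhs_nbhs; split => //; rewrite -HW; exists y => //.
Qed.

Lemma unif_inj : exists L, forall u v, agree L u v -> tau d u = tau d v -> u = v.
Proof.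
have H : forall x, exists n, forall u v, agree n x u -> agree n x v -> tau d u = tau d v -> u = v.
  move=> x; have [U [oU Ux _ [Hinj _ _]]] := LH.2 x.
  have [n Hn] := open_cyl_ex oU Ux.
  exists n => u v Hu Hv E; apply: Hinj E; rewrite inE; exact: Hn.
have [N HN] := unif H.
exists N => u v Huv E; have [x [n [nN Hx Hu]]] := HN u.
apply: Hx E => //; apply: agree_trans Hu _; exact: agree_le nN Huv.
Qed.

Lemma unif_lift L : exists M, forall y z, agree M (tau d y) z ->
  exists y', agree L y y' /\ tau d y' = z.
Proof.
have H : forall x, exists n, exists K, [/\ (L <= n)%N, (K + m <= n)%N &
    agree K (tau d x) `<=` tau d @` agree L x].
  move=> x.
  have xx : (tau d @` agree L x) (tau d x) by exists x.
  have [K HK] := open_cyl_ex (open_map (@open_cyl A x L)) xx.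
  by exists (maxn L (K + m)), K; split => //; lia.
have [N HN] := unif H.
exists N => y z Hz; have [x [n [nN [K [Ln Kn HK]] Hxy]]] := HN y.
  have Hxy' : agree K (tau d x) (tau d y).
  by apply: tau_loc; apply: agree_le Hxy; lia.
have [y' Hy' E] : (tau d @` agree L x) z.
  by apply: HK; apply: agree_trans Hxy' _; apply: agree_le Hz; lia.
exists y'; split => //; apply: agree_trans Hy'.
by apply: agree_sym; apply: agree_le Hxy.
Qed.

End Top.

Section Cover.
Variables (A : finType) (m : nat) (d : m.+1.-tuple A -> A).
Hypothesis LH : local_homeomorphism (tau d).
Variables (L M : nat).
Hypothesis HL : forall u v, agree L u v -> tau d u = tau d v -> u = v.
Hypothesis HM : forall y z, agree M (tau d y) z -> exists y', agree L y y' /\ tau d y' = z.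

Lemma cyl_eq n (x y : seqspace A) : agree n x y -> agree n x = agree n y.
Proof.
move=> H; apply/seteqP; split => z Hz.
  exact: agree_trans (agree_sym H) Hz.
exact: agree_trans H Hz.
Qed.

Lemma evenly b : evenly_covered (tau d) (agree M b).
Proof.
pose U := agree M b.
have oP : open (tau d @^-1` U).
  by apply: open_comp; [move=> x _; exact: LH.1 | exact: open_cyl].
split; first exact: open_cyl.
exists [set V | exists x, tau d x = b /\ V = agree L x `&` tau d @^-1` U]; split.
- apply/seteqP; split => y.
    move=> Hy; have [y' [Hyy' Ey']] := HM (agree_sym Hy).
    exists (agree L y' `&` tau d @^-1` U); first by exists y'.
    by split => //; exact: agree_sym.
  by move=> [V [x [_ ->]] [_ Hy]].
- by move=> V [x [_ ->]]; apply: openI => //; exact: open_cyl.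
- move=> V W [x [_ ->]] [x' [_ ->]] VW; apply/seteqP; split => // y [[Hy _] [Hy' _]].
  by exfalso; apply: VW; have E1 := cyl_eq Hy; have E2 := cyl_eq Hy'; rewrite E1 E2.
- move=> V [x [Hx ->]].
  have imV : tau d @` (agree L x `&` tau d @^-1` U) = U.
    apply/seteqP; split; first by move=> _ [y [_ Hy] <-].
    move=> z Hz; have [y' [Hy' Ey']] : exists y', agree L x y' /\ tau d y' = z.
      by apply: HM; rewrite Hx.
    by exists y' => //; split => //; rewrite /preimage /= Ey'.
  split => //; split.
  + move=> y y'; rewrite !inE => -[Hy _] [Hy' _] E.
    by apply: HL E; exact: agree_trans (agree_sym Hy) Hy'.
  + exact: continuous_subspaceT LH.1.
  + move=> O oO; exists (tau d @` (agree L x `&` O)); split.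
      by apply: open_map => //; apply: openI => //; exact: open_cyl.
    rewrite imV; apply/seteqP; split.
      by move=> _ [y [[Hy Py] Oy] <-]; split => //; exists y.
    move=> z [Uz [y [Hy Oy] E]]; exists y; last exact: E.
    by split => //; split => //; rewrite /preimage /= E.
Qed.

End Cover.
Local Open Scope card_scope.

Section Fib.
Variables (A : finType) (m : nat) (d : m.+1.-tuple A -> A).
Hypothesis SC : star_commute (tau d) (@sigma_shift A).
Variables (L M : nat).
Hypothesis HL : forall u v, agree L u v -> tau d u = tau d v -> u = v.
Hypothesis HM : forall y z, agree M (tau d y) z -> exists y', agree L y y' /\ tau d y' = z.

Definition fib (b : seqspace A) := tau d @^-1` [set b].

Lemma fib_shift z : fib z #= fib (sigma_shift z).
Proof.
have E : (@sigma_shift A) @` fib z = fib (sigma_shift z).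
  apply/seteqP; split.
    by move=> _ [x Hx <-]; rewrite /fib /preimage /= tau_shift Hx.
  move=> y Hy; have [x [[Hx1 Hx2] _]] := SC.2 y z Hy.
  by exists x.
rewrite -E; apply: card_esym; apply: inj_card_eq => x x'; rewrite !inE => Hx Hx' E'.
have Hy : tau d (sigma_shift x) = sigma_shift z by rewrite tau_shift Hx.
have [x0 [_ Hu]] := SC.2 _ _ Hy.
rewrite -(Hu x (conj erefl Hx)); apply: Hu; split => //.
Qed.

Definition pre (x : seqspace A) : L.-tuple A := [tuple x i | i < L].

Lemma pre_sub b b' : agree M b b' -> pre @` fib b `<=` pre @` fib b'.
Proof.
move=> H _ [x Hx <-].
have Hx2 : agree M (tau d x) b' by rewrite Hx.
have [x' [Hx' E]] := HM Hx2.
exists x' => //; apply: eq_from_tnth => i; rewrite !tnth_mktuple Hx' //.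
Qed.

Lemma fib_pre b : fib b #= pre @` fib b.
Proof.
apply: card_esym; apply: inj_card_eq => x x'; rewrite !inE => Hx Hx' E.
apply: HL; last by rewrite Hx Hx'.
move=> i Hi; have := congr1 (fun t => tnth t (Ordinal Hi)) E.
by rewrite !tnth_mktuple.
Qed.

Lemma fib_loc b b' : agree M b b' -> fib b #= fib b'.
Proof.
move=> H; have E : pre @` fib b = pre @` fib b'.
  by apply/seteqP; split; apply: pre_sub => //; exact: agree_sym.
apply: card_eq_trans (fib_pre b) _; rewrite E; exact: card_esym (fib_pre b').
Qed.

Lemma iter_shift n (x : seqspace A) : iter n (@sigma_shift A) x = fun i => x (i + n)%N.
Proof.
elim: n => [|n IH] /=; first by apply: functional_extensionality_dep => i; rewrite addn0.
by rewrite IH; apply: functional_extensionality_dep => i; rewrite /sigma_shift addSnnS.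
Qed.

Lemma fib_iter n z : fib z #= fib (iter n (@sigma_shift A) z).
Proof.
elim: n => [|n IH] /=; first exact: card_eqxx.
exact: card_eq_trans IH (fib_shift _).
Qed.

Lemma fib_all b0 b : fib b0 #= fib b.
Proof.
pose b'' : seqspace A := fun i => if (i < M)%N then b0 i else b (i - M)%N.
have H1 : agree M b0 b'' by move=> i Hi; rewrite /b'' Hi.
have H2 : iter M (@sigma_shift A) b'' = b.
  rewrite iter_shift; apply: functional_extensionality_dep => i.
  rewrite /b'' ifF ?addnK //; lia.
apply: card_eq_trans (fib_loc H1) _; rewrite -H2; exact: fib_iter.
Qed.

Lemma fib_finite b : exists k, fib b #= `I_k.
Proof.
have [k Hk] : finite_set (pre @` fib b) by exact: finite_finset.
by exists k; exact: card_eq_trans (fib_pre b) Hk.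
Qed.

End Fib.

Theorem theorem5p14 (A : finType) (phi : seqspace A -> seqspace A) :
  is_sliding_block_code phi ->
  (local_homeomorphism phi /\ star_commute phi (@sigma_shift A)) <->
  (exists k : nat, (0 < k)%N /\ kfold_covering_map k phi /\
     exists (m : nat) (d : m.+1.-tuple A -> A), regressive d /\ phi = tau d).
Proof.
move=> [m [d ->]]; split.
- move=> [LH SC].
  have reg := star_regressive SC.
  have [L HL] := unif_inj LH.
  have [M HM] := unif_lift LH L.
  have [[x0 _]|nox] := pselect (exists x0 : seqspace A, True); last first.
    exists 1%N; split => //; split; last by exists m, d.
    split; last by move=> b; exfalso; apply: nox; exists b.
    split; first exact: LH.1.
      by move=> b; exfalso; apply: nox; exists b.
    by move=> b; exfalso; apply: nox; exists b.
  have [k Hk] := fib_finite HL (tau d x0).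
  have Hb : forall b, fib d b #= `I_k.
    move=> b; exact: card_eq_trans (card_esym (fib_all SC HL HM (tau d x0) b)) Hk.
  case: k Hk Hb => [|k] Hk Hb.
    move: Hk; rewrite II0 card_eq0 => /eqP E.
    have : fib d (tau d x0) x0 by [].
    by rewrite E.
  exists k.+1; split => //; split; last by exists m, d.
  split; last exact: Hb.
  split; first exact: LH.1.
    move=> b; apply: contrapT => nb.
    have E : fib d b = set0.
      by apply/seteqP; split => // x Hx; apply: nb; exists x.
    have := Hb b; rewrite E card_eq_sym card_eq0 => /eqP E'.
    by have : `I_k.+1 0%N by []; rewrite E'.
  move=> b; exists (agree M b); split; first exact: agree_refl.
  have H := @evenly A m d LH L M HL HM b. exact: H.
- move=> [k [kpos [[[cont surj cov] card] [m' [d' [reg' E]]]]]].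
  split; last by rewrite E; exact: regressive_star.
  split; first exact: cont.
  move=> x; have [U [Ub [oU [F [Hpre oF _ HF]]]]] := cov (tau d x).
  have : (tau d @^-1` U) x by [].
  rewrite Hpre => -[V FV Vx].
  have [imV hV] := HF V FV.
  by exists V; split => //; [exact: oF | rewrite imV].
Qed.
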